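(* Let $k, m \in \mathbb{N}$ with $k \ge 2$ and $m \ge 4$, and let $f$ be a valid bounds-function. If $\mathrm{pdp}_f(k,m) = \emptyset$, then $\mathrm{minvdeg}(\mathcal{MU}_{\delta=k}) < m$.
   Context: Literals come with a fixed-point-free involution $x \mapsto \overline{x}$; variables are positive literals. A clause is a finite set $C$ of literals with $C \cap \overline{C} = \emptyset$; a clause-set is a finite set of clauses. $\delta(F) = |F| - |\mathrm{var}(F)|$. $\mathcal{MU}_{\delta=k}$ is the class of minimally unsatisfiable clause-sets (unsatisfiable, but satisfiable after removing any clause) of deficiency $k$. $\mathrm{ld}_F(x)$ is the number of clauses containing $x$, $\mathrm{vdeg}_F(v) = \mathrm{ld}_F(v)+\mathrm{ld}_F(\overline{v})$, $\mathrm{minvdeg}(F) = \min_{v \in \mathrm{var}(F)}\mathrm{vdeg}_F(v)$; for a class $\mathcal{D}$, $\mathrm{minvdeg}(\mathcal{D})$ is the supremum of $\mathrm{minvdeg}(F)$ over $F \in \mathcal{D}$ with $\mathrm{var}(F) \ne \emptyset$. Let $\mu(k) = \mathrm{minvdeg}(\mathcal{MU}_{\delta=k})$. A valid bounds-function is a function $f : \mathbb{N} \to \mathbb{N} \cup \{+\infty\}$ with $f(1) = 2$, $f$ monotonically increasing, and $\mu(k) \le f(k)$ for all $k \in \mathbb{N}$. For $k \ge 2$, $m \ge 4$, the set $\mathrm{pdp}_f(k,m)$ of potential degree-pairs is the set of pairs $(e_0,e_1) \in \mathbb{N}^2$ with: (i) $e_0, e_1 \ge 2$; (ii) $e_0,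 e_1 \le k$; (iii) $e_0 + e_1 = m$; (iv) $e_0 \le e_1$; (v) $f(k - e_\varepsilon + 1) + e_\varepsilon \ge m$ for both $\varepsilon \in \{0,1\}$. *)

(* Defs.v *)
From mathcomp Require Import all_boot all_order all_algebra.
From mathcomp Require Import finmap.
Set Implicit Arguments. Unset Strict Implicit. Unset Printing Implicit Defensive.
Local Open Scope fset_scope.

(* Variables are natural numbers; a literal is a pair (v, b):
   (v, true) is the positive literal v, (v, false) is its complement. *)
Definition lit := (nat * bool)%type.
Definition compl (x : lit) : lit := (x.1, ~~ x.2).
Definition clause := {fset lit}.
Definition clauseset := {fset clause}.

Definition is_clause (C : clause) : Prop := forall x, x \in C -> compl x \notin C.
Definition is_clauseset (F : clauseset) : Prop := forall C, C \in F -> is_clause C.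

Definition var (F : clauseset) : {fset nat} :=
  [fset x.1 | x in \bigcup_(C <- F) C].

Definition deficiency (F : clauseset) : int := (Posz #|` F| - Posz #|` var F|)%R.

Definition sat_clause (phi : nat -> bool) (C : clause) : Prop :=
  exists x, x \in C /\ phi x.1 = x.2.
Definition satisfiable (F : clauseset) : Prop :=
  exists phi : nat -> bool, forall C, C \in F -> sat_clause phi C.

Definition MU (F : clauseset) : Prop :=
  is_clauseset F /\ ~ satisfiable F /\
  forall C, C \in F -> satisfiable (F `\ C).

Definition ld (F : clauseset) (x : lit) : nat := #|` [fset C in F | x \in C]|.
Definition vdeg (F : clauseset) (v : nat) : nat := ld F (v, true) + ld F (v, false).

(* minimum of vdeg over var F (the seed value \max ... makes the minimum
   correct whenever var F is nonempty; only that case is used) *)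
Definition minvdeg (F : clauseset) : nat :=
  \big[minn / \max_(v <- var F) vdeg F v]_(v <- var F) vdeg F v.

(* N ∪ {+oo}: None = +oo *)
Definition natinf := option nat.
Definition le_inf (a b : natinf) : Prop :=
  match a, b with
  | _, None => True
  | None, Some _ => False
  | Some x, Some y => (x <= y)%N
  end.
Definition add_inf (a : natinf) (n : nat) : natinf :=
  match a with None => None | Some x => Some (x + n)%N end.

Definition mu_ub (k : nat) (b : natinf) : Prop :=
  forall F : clauseset, MU F -> deficiency F = Posz k -> var F != fset0 ->
    le_inf (Some (minvdeg F)) b.
Definition is_mu (k : nat) (s : natinf) : Prop :=
  mu_ub k s /\ forall b, mu_ub k b -> le_inf s b.

Definition valid_bounds_function (f : nat -> natinf) : Prop :=
  f 1%N = Some 2%N /\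
  (forall a b, (1 <= a)%N -> (a <= b)%N -> le_inf (f a) (f b)) /\
  (forall k s, (1 <= k)%N -> is_mu k s -> le_inf s (f k)).

Definition pdp (f : nat -> natinf) (k m e0 e1 : nat) : Prop :=
  [/\ (2 <= e0)%N /\ (2 <= e1)%N,
      (e0 <= k)%N /\ (e1 <= k)%N,
      (e0 + e1)%N = m,
      (e0 <= e1)%N &
      le_inf (Some m) (add_inf (f (k - e0 + 1)%N) e0) /\
      le_inf (Some m) (add_inf (f (k - e1 + 1)%N) e1)].

(* Main.v *)
Require Import Defs.
From mathcomp Require Import all_boot all_order all_algebra.
From mathcomp Require Import finmap.
From mathcomp Require Import zify.
From Stdlib Require Import Classical.
Set Implicit Arguments. Unset Strict Implicit. Unset Printing Implicit Defensive.
Local Open Scope fset_scope.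

Lemma mem_var (F : clauseset) w :
  w \in var F <-> exists C l, [/\ C \in F, l \in C & l.1 = w].
Proof.
split.
  move=> /imfsetP [l /= /bigfcupP [C /andP [CF _] lC] ->].
  by exists C, l.
move=> [C [l [CF lC <-]]]; apply/imfsetP; exists l => //=.
by apply/bigfcupP; exists C => //; rewrite CF.
Qed.

Lemma mem_varI (F : clauseset) C l : C \in F -> l \in C -> l.1 \in var F.
Proof. by move=> CF lC; apply/mem_var; exists C, l. Qed.

Lemma inj_card_le (T T' : choiceType) (A : {fset T}) (B : {fset T'}) (g : T -> T') :
  {in A &, injective g} -> (forall x, x \in A -> g x \in B) -> #|` A| <= #|` B|.
Proof.
move=> ginj gAB; rewrite -(eqP (introT (card_in_imfsetP _ _) ginj)).
apply: fsubset_leq_card; apply/fsubsetP => z /imfsetP [x /= xA ->]; exact: gAB.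
Qed.

Definition satF (phi : nat -> bool) (G : clauseset) := forall C, C \in G -> sat_clause phi C.

Lemma complK x : compl (compl x) = x.
Proof. by case: x => a b; rewrite /compl /= negbK. Qed.

Lemma compl_neq x : compl x != x.
Proof. by case: x => a [] ; rewrite /compl /= -pair_eqE /= andbF. Qed.

Lemma lit_cases (l y : lit) : l.1 = y.1 -> l = y \/ l = compl y.
Proof.
case: l y => a b [c d] /= ->; case: b; case: d; rewrite /compl /=; auto.
Qed.

Definition upd (phi : nat -> bool) w b := fun u => if u == w then b else phi u.

Lemma MU_nosub F C D : MU F -> C \in F -> D \in F -> C `<=` D -> C = D.
Proof.
move=> [_ [uns mini]] CF DF CD; apply: NNPP => nCD; apply: uns.
have [phi Hphi] := mini D DF.
exists phi => E EF; case: (eqVneq E D) => [->|ED].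
  have [l [lC pl]] : sat_clause phi C.
    by apply: Hphi; rewrite in_fsetD1 CF andbT; apply/eqP.
  by exists l; split => //; apply: (fsubsetP CD).
by apply: Hphi; rewrite in_fsetD1 EF ED.
Qed.

Lemma MU_nopure F C y : MU F -> C \in F -> y \in C -> exists2 D, D \in F & compl y \in D.
Proof.
move=> [cl [uns mini]] CF yC; apply: NNPP => nD; apply: uns.
have [phi Hphi] := mini C CF.
exists (upd phi y.1 y.2) => D DF.
case yD: (y \in D).
  by exists y; split => //; rewrite /upd eqxx.
have DC : D != C by apply/eqP => eDC; rewrite eDC yC in yD.
have DCF : D \in F `\ C by rewrite in_fsetD1 DC DF.
have [l [lD pl]] := Hphi D DCF.
exists l; split => //; rewrite /upd; case: eqP => // /lit_cases [ly|ly].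
  by rewrite -ly lD in yD.
by exfalso; apply: nD; exists D => //; rewrite -ly.
Qed.


Section AddLit.
Variables (F : clauseset) (C : clause) (y : lit).
Hypotheses (muF : MU F) (CF : C \in F) (yC : y \notin C) (cyC : compl y \notin C)
  (yv : y.1 \in var F) (nphi : forall phi, satF phi (F `\ C) -> phi y.1 <> y.2).

Let F' := (y |` C) |` (F `\ C).

Lemma al_notin : y |` C \notin F `\ C.
Proof.
apply/negP => /[dup] H; rewrite in_fsetD1 => /andP [_ DF].
have := MU_nosub muF CF DF (fsubsetU1 _ _) => eq.
by move: yC; rewrite eq in_fset1U eqxx.
Qed.

Lemma al_MU : MU F'.
Proof.
have [cl [uns mini]] := muF.
split; [|split].
- move=> D; rewrite in_fset1U => /orP [/eqP ->|].
    move=> x; rewrite !in_fset1U => /orP [/eqP ->|xC].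
      by rewrite negb_or compl_neq.
    rewrite negb_or (cl C CF x xC) andbT; apply/eqP => ex.
    by move: cyC; rewrite -ex complK xC.
  by rewrite in_fsetD1 => /andP [_ DF]; apply: cl.
- move=> [phi Hphi]; apply: uns; exists phi => D DF.
  have sFC : satF phi (F `\ C).
    by move=> E EFC; apply: Hphi; rewrite in_fset1U EFC orbT.
  case: (eqVneq D C) => [->|DC]; last by apply: sFC; rewrite in_fsetD1 DC DF.
  have [l [lD pl]] := Hphi (y |` C) (fset1U1 _ _).
  move: lD; rewrite in_fset1U => /orP [/eqP ly|lC]; last by exists l.
  by exfalso; apply: (nphi sFC); rewrite -ly.
- move=> D; rewrite in_fset1U => /orP [/eqP ->|].
    have -> : F' `\ (y |` C) = F `\ C.
      apply/fsetP => E; rewrite in_fsetD1 in_fset1U.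
      case: (eqVneq E (y |` C)) => [->|//]; by rewrite (negbTE al_notin).
    exact: mini.
  rewrite in_fsetD1 => /andP [DC DF].
  have [phi Hphi] := mini D DF; exists phi => E.
  rewrite in_fsetD1 in_fset1U => /andP [ED /orP [/eqP ->|]].
    have CFD : C \in F `\ D by rewrite in_fsetD1 eq_sym DC CF.
    have [l [lC pl]] := Hphi C CFD.
    by exists l; rewrite in_fset1U lC orbT.
  by rewrite in_fsetD1 => /andP [_ EF]; apply: Hphi; rewrite in_fsetD1 ED EF.
Qed.

Lemma al_card : #|` F'| = #|` F|.
Proof.
by rewrite cardfsU1 al_notin (cardfsD1 C F) CF.
Qed.

Lemma al_var : var F' = var F.
Proof.
apply/fsetP => w; apply/idP/idP.
  move=> /mem_var [D [l [DF' lD <-]]].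
  move: DF'; rewrite in_fset1U => /orP [/eqP eD|].
    move: lD; rewrite eD in_fset1U => /orP [/eqP ->//|lC].
    exact: mem_varI CF lC.
  by rewrite in_fsetD1 => /andP [_ DF]; apply: mem_varI DF lD.
move=> /mem_var [D [l [DF lD <-]]].
case: (eqVneq D C) => [eD|DC].
  by apply: (@mem_varI _ (y |` C)); [exact: fset1U1| rewrite in_fset1U -eD lD orbT].
by apply: (@mem_varI _ D) => //; rewrite in_fset1U in_fsetD1 DC DF orbT.
Qed.

Lemma al_ld l : ld F l <= ld F' l.
Proof.
pose g D := if D == C then y |` C else D.
apply: (@inj_card_le _ _ _ _ g).
  move=> D E; rewrite !inE /= => /andP [DF _] /andP [EF _].
  rewrite /g; case: (eqVneq D C) => [->|DC]; case: (eqVneq E C) => [->|EC] //.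
  - move=> eE; exfalso; move: al_notin; rewrite eE in_fsetD1 EC EF.
    by [].
  - move=> eD; exfalso; move: al_notin; rewrite -eD in_fsetD1 DC DF.
    by [].
move=> D; rewrite !inE /= => /andP [DF lD]; rewrite /g.
case: (eqVneq D C) => [eD|DC].
  by rewrite !inE /= eqxx /= -eD lD orbT.

by rewrite DC DF lD orbT.
Qed.

Lemma al_sum : \sum_(D <- F') #|` D| = (\sum_(D <- F) #|` D|).+1.
Proof.
rewrite big_fsetU1 ?al_notin // (big_fsetD1 _ CF) cardfsU1 yC /=.
by rewrite addSn.
Qed.

End AddLit.


Definition sat_prop (F : clauseset) := forall C y, C \in F -> y \notin C -> compl y \notin C ->
  y.1 \in var F -> exists phi, satF phi (F `\ C) /\ phi y.1 = y.2.

Definition LF (F : clauseset) : {fset lit} :=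
  [fset (w, true) | w in var F] `|` [fset (w, false) | w in var F].

Lemma sum_bound (F : clauseset) : \sum_(D <- F) #|` D| <= #|` F| * #|` LF F|.
Proof.
have : \sum_(D <- F) #|` D| <= \sum_(D <- F) #|` LF F|.
  rewrite big_seq [X in _ <= X]big_seq; apply: leq_sum => D DF.
  apply: fsubset_leq_card; apply/fsubsetP => l lD.
  have lv := mem_varI DF lD.
  case: l lv {lD} => w [] lv; rewrite in_fsetU; apply/orP; [left|right];
    by apply/imfsetP; exists w.
by rewrite big_const_seq count_predT iter_addn_0 mulnC.
Qed.

Lemma saturate n : forall F : clauseset, #|` F| * #|` LF F| - \sum_(D <- F) #|` D| < n -> MU F ->
  exists F', [/\ MU F', #|` F'| = #|` F|, var F' = var F,
     (forall l, ld F l <= ld F' l) & sat_prop F'].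
Proof.
elim: n => [//|n IH] F mF muF.
case: (classic (sat_prop F)) => [sp|nsp].
  by exists F; split.
have [C [y [CF yC cyC yv nphi]]] : exists C y, [/\ C \in F, y \notin C, compl y \notin C,
    y.1 \in var F & forall phi, satF phi (F `\ C) -> phi y.1 <> y.2].
  apply: NNPP => H; apply: nsp => C y CF yC cyC yv; apply: NNPP => H2; apply: H.
  exists C, y; split => // phi sp e; apply: H2; by exists phi.
have mu' := al_MU muF CF yC cyC nphi.
have c' := al_card muF CF yC.
have v' := al_var CF yv.
have s' := al_sum muF CF yC.
have b' := sum_bound ((y |` C) |` (F `\ C)).
have [F'' [m1 m2 m3 m4 m5]] : exists F', [/\ MU F', #|` F'| = #|` (y |` C) |` (F `\ C)|,
     var F' = var ((y |` C) |` (F `\ C)),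
     (forall l, ld ((y |` C) |` (F `\ C)) l <= ld F' l) & sat_prop F'].
  apply: IH mu'.
  move: b'; rewrite /LF v' c' s' -/(LF F) => b'; lia.
exists F''; split => //; first by rewrite m2.
  by rewrite m3.
by move=> l; apply: leq_trans (al_ld muF CF yC l) (m4 l).
Qed.


Definition occ (F : clauseset) w : clauseset :=
  [fset D in F | ((w, true) \in D) || ((w, false) \in D)].

Lemma card_part (F : clauseset) (P : pred clause) :
  (#|` [fset D in F | P D]| + #|` [fset D in F | ~~ P D]|)%N = #|` F|.
Proof.
rewrite -cardfsUI.
have -> : [fset D in F | P D] `&` [fset D in F | ~~ P D] = fset0.
  apply/fsetP => D; rewrite !inE /=; by case: (P D); rewrite !andbF.
have -> : [fset D in F | P D] `|` [fset D in F | ~~ P D] = F.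
  apply/fsetP => D; rewrite !inE /=; by case: (P D); rewrite ?andbT ?andbF ?orbF.
by rewrite cardfs0 addn0.
Qed.

Lemma vdeg_occ F w : is_clauseset F -> vdeg F w = #|` occ F w|.
Proof.
move=> cl; rewrite /vdeg /ld -cardfsUI.
have -> : [fset C in F | (w, true) \in C] `&` [fset C in F | (w, false) \in C] = fset0.
  apply/fsetP => D; rewrite !inE /=.
  case DF: (D \in F) => //=; case tD: ((w,true) \in D) => //=.
  by have := cl D DF _ tD; rewrite /compl /= => /negbTE.
rewrite cardfs0 addn0; congr #|` _|; apply/fsetP => D; rewrite !inE /=.
by case: (D \in F).
Qed.

Section Split.
Variables (F : clauseset) (x : lit).
Hypotheses (muF : MU F) (spF : sat_prop F) (xv : x.1 \in var F).

Definition hx (D : clause) : clause := D `\ compl x.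
Definition Fx := [fset D in F | x \notin D].
Definition Gx : clauseset := hx @` Fx.

Lemma Gx_mem E : E \in Gx <-> exists D, [/\ D \in F, x \notin D & E = hx D].
Proof.
split.
  by move=> /imfsetP [D /=]; rewrite !inE /= => /andP [DF xD] ->; exists D.
by move=> [D [DF xD ->]]; apply/imfsetP; exists D => //=; rewrite !inE /= DF xD.
Qed.

Lemma hx_inj : {in Fx &, injective hx}.
Proof.
have key : forall D E, D \in F -> E \in F -> compl x \in D -> compl x \notin E ->
    hx D = hx E -> D = E.
  move=> D E DF EF cD cE eh.
  apply: esym; apply: (MU_nosub muF EF DF); apply/fsubsetP => l lE.
  have : l \in hx E by rewrite /hx in_fsetD1 lE andbT; apply/eqP => el; rewrite -el lE in cE.
  by rewrite -eh /hx in_fsetD1 => /andP [_].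
move=> D E; rewrite !inE /= => /andP [DF _] /andP [EF _] eh.
case cD: (compl x \in D); case cE: (compl x \in E).
- by rewrite -(fsetD1K cD) -(fsetD1K cE); congr (_ |` _).
- by apply: key => //; rewrite cE.
- by apply: esym; apply: key => //; rewrite ?cD.
- by move: eh; rewrite /hx !mem_fsetD1 ?cD ?cE.
Qed.

Lemma Gx_card : (#|` Gx| + ld F x)%N = #|` F|.
Proof.
rewrite (eqP (introT (card_in_imfsetP _ _) hx_inj)) addnC.
exact: (card_part F (fun D => x \in D)).
Qed.

Lemma sat_upd_x psi : satF psi Gx -> satF (upd psi x.1 x.2) F.
Proof.
move=> Hpsi D DF; case xD: (x \in D).
  by exists x; rewrite /upd eqxx.
have [l [lh pl]] : sat_clause psi (hx D) by apply: Hpsi; apply/Gx_mem; exists D; rewrite xD.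
move: lh; rewrite /hx in_fsetD1 => /andP [lc lD].
exists l; split => //; rewrite /upd; case: eqP => // /lit_cases [ly|ly].
  by rewrite ly xD in lD.
by rewrite ly eqxx in lc.
Qed.

Lemma Gx_MU : MU Gx.
Proof.
have [cl [uns mini]] := muF.
split; [|split].
- move=> E /Gx_mem [D [DF xD ->]] l; rewrite /hx !in_fsetD1 => /andP [_ lD].
  by rewrite (negbTE (cl D DF l lD)) andbF.
- by move=> [psi Hpsi]; apply: uns; exists (upd psi x.1 x.2); apply: sat_upd_x.
- move=> E /Gx_mem [D [DF xD ->]].
  have [phi [Hphi px]] : exists phi, satF phi (F `\ D) /\ phi x.1 = x.2.
    case cD: (compl x \in D); last first.
      by apply: spF => //; rewrite cD.
    have [phi Hphi] := mini D DF; exists phi; split => //.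
    apply: NNPP => npx; apply: uns; exists phi => E0 E0F.
    case: (eqVneq E0 D) => [->|ED]; last by apply: Hphi; rewrite in_fsetD1 ED E0F.
    exists (compl x); split => //; rewrite /compl /=.
    by move: npx; case: (phi x.1); case: (x.2).
  exists phi => E1; rewrite in_fsetD1 => /andP [ne /Gx_mem [E2 [EF xE eE]]].
  have ED : E2 != D by apply: contraNneq ne => eED; rewrite eE eED.
  have EFD : E2 \in F `\ D by rewrite in_fsetD1 ED EF.
  have [l [lE pl]] := Hphi E2 EFD.
  exists l; split => //; rewrite eE /hx in_fsetD1 lE andbT.
  apply/eqP => lc; move: pl; rewrite lc /compl /= px.
  by case: (x.2).
Qed.

Lemma Gx_var_sub : var Gx `<=` var F `\ x.1.
Proof.
apply/fsubsetP => w /mem_var [E [l [/Gx_mem [D [DF xD ->]] lh <-]]].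
move: lh; rewrite /hx in_fsetD1 => /andP [lc lD].
rewrite in_fsetD1 (mem_varI DF lD) andbT.
apply/eqP => /lit_cases [lx|lx]; first by rewrite -lx lD in xD.
by rewrite lx eqxx in lc.
Qed.

Definition Xx w := [fset D in F | (x \in D) && (((w, true) \in D) || ((w, false) \in D))].

Lemma Gx_vdeg w : w != x.1 -> vdeg F w <= (vdeg Gx w + #|` Xx w|)%N.
Proof.
have [cl _] := muF.
have clG : is_clauseset Gx by have [] := Gx_MU.
move=> wx; rewrite (vdeg_occ _ cl) (vdeg_occ _ clG).
pose Y := [fset D in F | (x \notin D) && (((w, true) \in D) || ((w, false) \in D))].
have -> : occ F w = Y `|` Xx w.
  apply/fsetP => D; rewrite !inE /=.
  by case: (D \in F); case: (x \in D); rewrite ?orbF.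
rewrite cardfsU; apply: leq_trans (leq_subr _ _) _; rewrite leq_add2r.
apply: (@inj_card_le _ _ _ _ hx).
  move=> D E DY EY; apply: hx_inj; move: DY EY; rewrite !inE /=.
  - by move=> /andP [-> /andP [-> _]].
  - by move=> _ /andP [-> /andP [-> _]].
move=> D; rewrite !inE /= => /andP [DF /andP [xD wD]].
have hG : hx D \in Gx by apply/Gx_mem; exists D.
rewrite hG /=.
have nc : forall b, (w, b) != compl x.
  by move=> b; apply: contra wx => /eqP/(congr1 fst) /= ->.
by rewrite !nc.
Qed.

Lemma Gx_var_sup w : w \in var F -> w != x.1 -> ld F x < vdeg F w -> w \in var Gx.
Proof.
have [cl _] := muF.
move=> wF wx; rewrite (vdeg_occ _ cl) => lt.
have : ~~ (occ F w `<=` [fset D in F | x \in D]).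
  by apply: contraTN lt => /fsubset_leq_card; rewrite -leqNgt.
move=> /fsubsetPn [D]; rewrite !inE /= => /andP [DF wD].
rewrite DF /= => xD.
have hG : hx D \in Gx by apply/Gx_mem; exists D; rewrite xD.
have nc : forall b, (w, b) != compl x.
  by move=> b; apply: contra wx => /eqP/(congr1 fst) /= ->.
move: wD => /orP [wD|wD].
  by apply: (@mem_varI _ _ (w, true) hG); rewrite /hx in_fsetD1 nc.
by apply: (@mem_varI _ _ (w, false) hG); rewrite /hx in_fsetD1 nc.
Qed.

End Split.

Import Order.TTheory GRing.Theory Num.Theory.
Section TarsiAll.
Local Open Scope ring_scope.

Lemma pos_lit (a : rat) (b1 b2 : bool) :
  0 < a * ((b1 : nat)%:R - (b2 : nat)%:R) -> (b1 && (0 < a)) || (b2 && (a < 0)).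
Proof.
case: b1; case: b2 => /=; rewrite ?subrr ?mulr0 ?ltxx // ?subr0 ?mulr1 ?sub0r ?mulrN1 ?oppr_gt0 //.
by move=> ->.
Qed.

Section Tarsi.
Variable G : clauseset.
Hypothesis muG : MU G.

Let V := var G.
Let n := #|` V|%fset.
Let p := #|` G|%fset.
Let vr (i : 'I_n) : nat := nth 0%N V i.
Let cl (j : 'I_p) : clause := nth fset0 G j.
Let M : 'M[rat]_(n, p) :=
  \matrix_(i, j) ((((vr i, true) \in cl j) : nat)%:R - (((vr i, false) \in cl j) : nat)%:R).

Let vr_mem i : vr i \in V.
Proof. exact: mem_nth. Qed.

Let idx_vr i : index (vr i) V = i.
Proof. by rewrite /vr index_uniq ?fset_uniq. Qed.

Definition yf n' (y : 'rV[rat]_n') (k : nat) : rat := if insub k is Some i then y 0 i else 0.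

Lemma yf_ord n' (y : 'rV[rat]_n') (i : 'I_n') : yf y i = y 0 i.
Proof. by rewrite /yf valK. Qed.

Let sat_of_pos (chi : nat -> bool) (y : 'rV[rat]_n) i j :
  0 < y 0 i * M i j -> chi (vr i) = (0 < y 0 i) -> sat_clause chi (cl j).
Proof.
rewrite mxE => /pos_lit /orP [/andP [h1 h2]| /andP [h1 h2]] hc.
  by exists (vr i, true); split => //=; rewrite hc h2.
exists (vr i, false); split => //=; rewrite hc.
by apply/negbTE; rewrite -leNgt ltW.
Qed.

Let M_nz i j l : (l \in cl j) -> (compl l \notin cl j) -> l.1 = vr i -> M i j != 0.
Proof.
rewrite mxE; case: l => w [] /= lD clD <-; move: clD; rewrite /compl /=.
  by move=> /negbTE ->; rewrite lD subr0 oner_neq0.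
by move=> /negbTE ->; rewrite lD sub0r oppr_eq0 oner_neq0.
Qed.

Let clj (D : clause) : D \in G -> exists j : 'I_p, cl j = D.
Proof.
move=> DG; have jl : (index D G < p)%N by rewrite index_mem.
by exists (Ordinal jl); rewrite /cl nth_index.
Qed.

Let vri (w : nat) : w \in V -> exists i : 'I_n, vr i = w.
Proof.
move=> wV; have il : (index w V < n)%N by rewrite index_mem.
by exists (Ordinal il); rewrite /vr nth_index.
Qed.

Lemma tarsi : (#|` var G| < #|` G|)%N.
Proof.
rewrite -/V -/n -/p ltnNge; apply/negP => hnp.
have [cl0 [uns mini]] := muG.
case: (ltnP (\rank M) n) => hr.
- have : kermx M != 0.
    by rewrite -mxrank_eq0 mxrank_ker subn_eq0 -ltnNge.
  move=> /matrix0Pn [i1 [i0 nz]].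
  pose y := row i1 (kermx M).
  have yM : y *m M = 0 by rewrite /y -row_mul mulmx_ker row0.
  have y0 : y 0 i0 != 0 by rewrite mxE.
  have [D0 [l0 [D0G l0D0 l0v]]] : exists D0 l0, [/\ D0 \in G, l0 \in D0 & l0.1 = vr i0].
    by apply/mem_var.
  have [psi Hpsi] := mini D0 D0G.
  pose chi w := if (w \in V) && (yf y (index w V) != 0) then 0 < yf y (index w V) else psi w.
  have chi_vr i : y 0 i != 0 -> chi (vr i) = (0 < y 0 i).
    by move=> yi; rewrite /chi vr_mem idx_vr yf_ord yi.
  apply: uns; exists chi => D DG.
  have [j clD] := clj DG.
  have sj : \sum_i y 0 i * M i j = 0.
    by have := congr1 (fun A : 'rV[rat]_p => A 0 j) yM; rewrite !mxE.
  case: (classic (exists i, y 0 i * M i j != 0)) => [[i ne]|].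
    have [i2 pos] : exists i, 0 < y 0 i * M i j.
      apply: NNPP => H.
      have nn : forall i, 0 <= - (y 0 i * M i j).
        move=> i'; rewrite oppr_ge0 leNgt; apply/negP => h; apply: H; by exists i'.
      have := @psumr_eq0P _ _ xpredT _ (fun i' _ => nn i').
      rewrite sumrN sj oppr0 => /(_ erefl i erefl) /eqP; rewrite oppr_eq0.
      by rewrite (negbTE ne).
    rewrite -clD; apply: (sat_of_pos pos); apply: chi_vr.
    by apply: contraTneq pos => ->; rewrite mul0r ltxx.
  move=> nex.
  have DD0 : D != D0.
    apply/eqP => eD; apply: nex; exists i0; rewrite mulf_neq0 //.
    by apply: (M_nz (l := l0)); rewrite ?clD ?eD // (cl0 D0 D0G).
  have DG0 : (D \in G `\ D0)%fset by rewrite in_fsetD1 DD0 DG.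
  have [l [lD pl]] := Hpsi D DG0.
  exists l; split => //; rewrite -pl /chi.
  have lV : l.1 \in V by apply: mem_varI DG lD.
  have [i li] := vri lV.
  rewrite lV /= -li idx_vr yf_ord.
  case: (eqVneq (y 0 i) 0) => //= yi.
  exfalso; apply: nex; exists i; rewrite mulf_neq0 //.
  by apply: (M_nz (l := l)); rewrite ?clD // (cl0 D DG).
- have rf : row_full M.
    rewrite /row_full eqn_leq rank_leq_col /=.
    rewrite /row_full.
    exact: leq_trans hnp hr.
  have /submxP [y ey] := submx_full (const_mx 1 : 'rV[rat]_p) rf.
  apply: uns; exists (fun w => 0 < yf y (index w V)) => D DG.
  have [j clD] := clj DG.
  have sj : \sum_i y 0 i * M i j = 1.
    by have := congr1 (fun A : 'rV[rat]_p => A 0 j) ey; rewrite !mxE => <-.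
  have [i pos] : exists i, 0 < y 0 i * M i j.
    apply: NNPP => H.
    have : \sum_i y 0 i * M i j <= 0.
      apply: sumr_le0 => i' _; rewrite leNgt; apply/negP => h; apply: H; by exists i'.
    by rewrite sj ler10.
  rewrite -clD; apply: (sat_of_pos pos).
  by rewrite idx_vr yf_ord.
Qed.

End Tarsi.
End TarsiAll.


Lemma bigmin_le (T : eqType) (s : seq T) (g : T -> nat) x0 a :
  a \in s -> \big[minn/x0]_(i <- s) g i <= g a.
Proof.
elim: s => [//|b s IH]; rewrite in_cons big_cons => /orP [/eqP ->|as_].
  exact: geq_minl.
by apply: leq_trans (geq_minr _ _) (IH as_).
Qed.

Lemma bigmin_cases (T : eqType) (s : seq T) (g : T -> nat) x0 :
  \big[minn/x0]_(i <- s) g i = x0 \/ exists2 a, a \in s & \big[minn/x0]_(i <- s) g i = g a.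
Proof.
elim: s => [|b s IH]; first by rewrite big_nil; left.
rewrite big_cons; case: (leqP (g b) (\big[minn/x0]_(i <- s) g i)) => h.
  by right; exists b; rewrite ?mem_head.
case: IH => [->|[a as_ ->]]; [left|right] => //.
by exists a; rewrite // in_cons as_ orbT.
Qed.

Lemma bigmax_ge (T : eqType) (s : seq T) (g : T -> nat) a :
  a \in s -> g a <= \max_(i <- s) g i.
Proof.
elim: s => [//|b s IH]; rewrite in_cons big_cons => /orP [/eqP ->|as_].
  exact: leq_maxl.
by apply: leq_trans (IH as_) (leq_maxr _ _).
Qed.

Lemma minvdeg_le F v : v \in var F -> minvdeg F <= vdeg F v.
Proof. exact: bigmin_le. Qed.

Lemma minvdeg_ex F : var F != fset0 -> exists2 v, v \in var F & vdeg F v = minvdeg F.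
Proof.
case: (fset_0Vmem (var F)) => [->|[a aF] _]; first by rewrite eqxx.
rewrite /minvdeg; case: (bigmin_cases (var F) (vdeg F) (\max_(v <- var F) vdeg F v)) => [e|[b bF e]].
  exists a => //; apply/eqP; rewrite eqn_leq (bigmin_le _ _ aF) andbT.
  by rewrite e; apply: bigmax_ge.
by exists b.
Qed.

Lemma ex_min_nat (Q : nat -> Prop) n : Q n -> exists b, Q b /\ forall c, Q c -> b <= c.
Proof.
elim: n {-2}n (leqnn n) => [|N IH] n hn qn.
  by exists n; split => // c _; move: hn; rewrite leqn0 => /eqP ->.
case: (classic (exists c, c < n /\ Q c)) => [[c [cn qc]]|nc].
  by apply: (IH c) => //; rewrite -ltnS; apply: leq_trans cn hn.
exists n; split => // c qc; rewrite leqNgt; apply/negP => cn; apply: nc; by exists c.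
Qed.

Lemma mu_exists k : exists s, is_mu k s.
Proof.
case: (classic (exists b, mu_ub k (Some b))) => [[b0 hb0]|nex].
  have [b [hb hmin]] := @ex_min_nat (fun b => mu_ub k (Some b)) b0 hb0.
  exists (Some b); split => // [[c|//]] hc.
  exact: hmin.
exists None; split => // [[c|//]] hc; exfalso; apply: nex; by exists c.
Qed.


Lemma le_inf_trans a b c : le_inf a b -> le_inf b c -> le_inf a c.
Proof. by case: a; case: b; case: c => //= x y z; apply: leq_trans. Qed.

Lemma f_bound f k' G : valid_bounds_function f -> 1 <= k' -> MU G ->
  deficiency G = Posz k' -> var G != fset0 -> le_inf (Some (minvdeg G)) (f k').
Proof.
move=> [_ [_ vf]] hk muG dG vG; have [s [ub lst]] := mu_exists k'.
exact: le_inf_trans (ub G muG dG vG) (vf k' s hk (conj ub lst)).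
Qed.

Lemma cond_of f k m t e a : valid_bounds_function f ->
  le_inf (Some t) (f (k - e + 1)%N) -> e <= k -> a <= e -> m <= t + a ->
  le_inf (Some m) (add_inf (f (k - a + 1)%N) a).
Proof.
move=> [_ [mon _]] ht ek ae mt.
have hm : le_inf (f (k - e + 1)%N) (f (k - a + 1)%N) by apply: mon; lia.
move: ht hm; case: (f (k - e + 1)%N) => [u|]; case: (f (k - a + 1)%N) => [u'|] //=.
move=> h1 h2; lia.
Qed.

Lemma pair_exists f k m M2 e0 e1 : valid_bounds_function f -> 4 <= m -> m <= M2 ->
  (e0 + e1 = M2)%N -> 2 <= e0 -> 2 <= e1 -> e0 <= k -> e1 <= k ->
  le_inf (Some (M2 - e0)) (f (k - e0 + 1)%N) -> le_inf (Some (M2 - e1)) (f (k - e1 + 1)%N) ->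
  exists a b, pdp f k m a b.
Proof.
move=> vf hm hM he h0 h1 k0 k1 f0 f1.
pose d := (M2 - m)%N; pose r := minn d (e0 - 2).
pose a := (e0 - r)%N; pose b := (e1 - (d - r))%N.
have ca := cond_of (m := m) (a := a) vf f0 k0.
have cb := cond_of (m := m) (a := b) vf f1 k1.
have Ha : le_inf (Some m) (add_inf (f (k - a + 1)%N) a).
  apply: ca; rewrite /a /r /d; lia.
have Hb : le_inf (Some m) (add_inf (f (k - b + 1)%N) b).
  apply: cb; rewrite /b /r /d; lia.
have a2 : 2 <= a by rewrite /a /r /d; lia.
have b2 : 2 <= b by rewrite /b /r /d; lia.
have ak : a <= k by rewrite /a; lia.
have bk : b <= k by rewrite /b; lia.
have ab : (a + b = m)%N by rewrite /a /b /r /d; lia.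
case: (leqP a b) => hab.
  by exists a, b; split.
by exists b, a; split => //; [lia| apply: ltnW].
Qed.


Lemma card_ge1 (T : choiceType) (A : {fset T}) a : a \in A -> 1 <= #|` A|.
Proof.
move=> aA; apply: leq_trans (fsubset_leq_card (_ : [fset a] `<=` A)).
  by rewrite cardfs1.
by rewrite fsub1set.
Qed.

Lemma ld_pos F v b : MU F -> v \in var F -> 1 <= ld F (v, b).
Proof.
move=> muF /mem_var [C [l [CF lC lv]]].
have : l.1 = (v, b).1 by [].
move=> /lit_cases [e|e].
  by apply: (@card_ge1 _ _ C); rewrite !inE /= CF -e lC.
have [D DF cD] := MU_nopure muF CF lC.
by apply: (@card_ge1 _ _ D); rewrite !inE /= DF; move: cD; rewrite e complK.
Qed.

Lemma single_var F v b : is_clauseset F -> (forall w, w \in var F -> w = v) -> ld F (v, b) <= 1.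
Proof.
move=> cl hv; rewrite /ld -(cardfs1 [fset (v, b)]); apply: fsubset_leq_card.
apply/fsubsetP => D; rewrite !inE /= => /andP [DF xD]; apply/eqP/fsetP => l.
rewrite inE; apply/idP/eqP => [lD|->//].
have : l.1 = (v, b).1 by rewrite /= (hv _ (mem_varI DF lD)).
move=> /lit_cases [//|e]; move: (cl D DF _ xD); by rewrite -e lD.
Qed.

Lemma vdeg_ld F x : vdeg F x.1 = (ld F x + ld F (compl x))%N.
Proof. by case: x => v [] //=; rewrite /vdeg addnC. Qed.

Lemma occ_lit (D : clause) l : l \in D -> ((l.1, true) \in D) || ((l.1, false) \in D).
Proof. by case: l => w [] /= ->; rewrite ?orbT. Qed.

Section Info.
Variables (F : clauseset) (k : nat) (x : lit).
Hypotheses (muF : MU F) (spF : sat_prop F) (xv : x.1 \in var F)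
  (dF : deficiency F = Posz k)
  (hdeg : forall w, w \in var F -> w != x.1 -> ld F x < vdeg F w)
  (w0 : nat) (w0F : w0 \in var F) (w0x : w0 != x.1).

Lemma info_var : var (Gx F x) = var F `\ x.1.
Proof.
apply/fsetP => w; apply/idP/idP.
  by apply: (fsubsetP (Gx_var_sub F x)).
rewrite in_fsetD1 => /andP [wx wF].
by apply: Gx_var_sup => //; apply: hdeg.
Qed.

Lemma info_card : (#|` Gx F x| + ld F x)%N = #|` F|.
Proof. exact: Gx_card muF. Qed.

Lemma info_MU : MU (Gx F x).
Proof. exact: Gx_MU muF spF xv. Qed.

Lemma info_nonempty : var (Gx F x) != fset0.
Proof.
apply/eqP => e; have : w0 \in var (Gx F x) by rewrite info_var in_fsetD1 w0x w0F.
by rewrite e.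
Qed.

Lemma info_le : ld F x <= k.
Proof.
have t := tarsi info_MU; have c := info_card.
have cv := cardfsD1 x.1 (var F); rewrite xv -info_var in cv.
move: dF; rewrite /deficiency => dF'.
lia.
Qed.

Lemma info_def : deficiency (Gx F x) = Posz (k - ld F x + 1).
Proof.
have c := info_card; have l := info_le.
have cv := cardfsD1 x.1 (var F); rewrite xv -info_var in cv.
move: dF; rewrite /deficiency => dF'.
lia.
Qed.

End Info.


Section Sing.
Variables (F : clauseset) (C : clause) (x : lit).
Hypotheses (muF : MU F) (spF : sat_prop F) (CF : C \in F) (xC : x \in C)
  (uC : forall D, D \in F -> x \in D -> D = C).

Lemma sing_sub D yw : D \in F -> compl x \in D -> yw \in C -> yw.1 != x.1 -> yw \in D.
Proof.
have [cl [uns mini]] := muF.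
move=> DF cD ywC ywx.
have key : forall phi, satF phi (F `\ D) -> phi yw.1 <> yw.2.
  move=> phi hphi e.
  have phiD : ~ sat_clause phi D.
    move=> sD; apply: uns; exists phi => E EF; case: (eqVneq E D) => [->//|ED].
    by apply: hphi; rewrite in_fsetD1 ED EF.
  have phix : phi x.1 = x.2.
    apply: NNPP => nx; apply: phiD; exists (compl x); split => //.
    by move: nx; rewrite /compl /=; case: (phi x.1); case: (x.2).
  apply: uns; exists (upd phi x.1 (~~ x.2)) => E EF.
  case cE: (compl x \in E).
    by exists (compl x); split => //; rewrite /upd /compl /= eqxx.
  case: (eqVneq E C) => [->|EC].
    exists yw; split => //; rewrite /upd (negbTE ywx) //.
  have ED : E != D by apply: contraNneq (negbT cE) => ->.
  have EFD : E \in F `\ D by rewrite in_fsetD1 ED EF.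
  have [l [lE pl]] := hphi E EFD.
  exists l; split => //; rewrite /upd; case: eqP => // /lit_cases [lx|lx].
    by move: EC; rewrite (uC EF) ?eqxx // -lx.
  by rewrite -lx lE in cE.
have ncD : compl yw \notin D.
  apply/negP => cyD; have [phi Hphi] := mini D DF.
  apply: uns; exists phi => E EF; case: (eqVneq E D) => [->|ED].
    exists (compl yw); split => //; rewrite /compl /=.
    by move: (key phi Hphi); case: (phi yw.1); case: (yw.2).
  by apply: Hphi; rewrite in_fsetD1 ED EF.
apply: NNPP => nyD.
have nyD2 : yw \notin D by apply/negP.
have [phi [Hphi e]] := spF DF nyD2 ncD (mem_varI CF ywC).
exact: key Hphi e.
Qed.

Lemma sing_count yw : yw \in C -> yw.1 != x.1 -> (ld F (compl x) + 2 <= vdeg F yw.1)%N.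
Proof.
have [cl [uns mini]] := muF.
move=> ywC ywx.
have [E EF cE] := MU_nopure muF CF ywC.
pose A := [fset D in F | compl x \in D].
have CA : C \notin A.
  by rewrite !inE /= CF /= (cl C CF x xC).
have EA : E \notin A.
  rewrite !inE /= EF /=; apply/negP => cxE.
  have := sing_sub EF cxE ywC ywx => ywE.
  by move: (cl E EF _ ywE); rewrite cE.
have CE : C != E.
  apply/eqP => e; move: (cl C CF _ ywC); by rewrite e cE.
have -> : (ld F (compl x) + 2 = #|` C |` (E |` A)|)%N.
  rewrite cardfsU1 cardfsU1 EA in_fset1U negb_or CE CA /=.
  by rewrite /ld addnC.
rewrite (vdeg_occ _ cl); apply: fsubset_leq_card; apply/fsubsetP => D.
rewrite !in_fset1U => /orP [/eqP ->|/orP [/eqP ->|]].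
- by rewrite !inE /= CF /= (occ_lit ywC).
- by rewrite !inE /= EF /= (occ_lit cE).
- rewrite !inE /= => /andP [DF cxD].
  by rewrite DF /= (occ_lit (sing_sub DF cxD ywC ywx)).
Qed.

End Sing.


Lemma ar1 (m M c vF vG X : nat) : m <= M -> (1 + c)%N = M -> (c + 2 <= vF)%N ->
  vF <= (vG + X)%N -> X <= 1 -> m <= vG.
Proof. lia. Qed.

Lemma ar2 (M e vF vG X : nat) : M <= vF -> vF <= (vG + X)%N -> X <= e -> M - e <= vG.
Proof. lia. Qed.

Lemma main_ind k m f : 2 <= k -> 4 <= m -> valid_bounds_function f ->
  (forall e0 e1, ~ pdp f k m e0 e1) ->
  forall n (F : clauseset), #|` F| <= n -> MU F -> deficiency F = Posz k ->
  var F != fset0 -> m <= minvdeg F -> False.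
Proof.
move=> hk hm vf nop; elim=> [|n IH] F hn muF dF vF hmF.
  have [_ [uns _]] := muF; apply: uns; exists (fun _ => true) => C.
  by move: hn; rewrite leqn0 => /eqP /cardfs0_eq ->; rewrite in_fset0.
have [F1 [mu1 c1 v1 ld1 sp1]] := saturate (ltnSn _) muF.
have d1 : deficiency F1 = Posz k by rewrite /deficiency c1 v1.
have vF1 : var F1 != fset0 by rewrite v1.
have [cl1 _] := mu1.
have [v vin vmin] := minvdeg_ex vF1.
have hmin w : w \in var F1 -> minvdeg F1 <= vdeg F1 w by apply: minvdeg_le.
have hM2 : m <= minvdeg F1.
  rewrite -vmin; have vinF : v \in var F by rewrite -v1.
  apply: leq_trans hmF _; apply: leq_trans (minvdeg_le vinF) _.
  by rewrite /vdeg; apply: leq_add; apply: ld1.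
have [w0 w0F w0v] : exists2 w0, w0 \in var F1 & w0 != v.
  apply: NNPP => H.
  have hv : forall w, w \in var F1 -> w = v.
    by move=> w wF; apply: NNPP => ne; apply: H; exists w => //; apply/eqP.
  have := single_var true cl1 hv; have := single_var false cl1 hv.
  move: vmin hM2; rewrite /vdeg => h1 h2 h3 h4; have := leq_add h4 h3; rewrite h1 => h5.
  by have := leq_trans hm (leq_trans h2 h5).
have lp b : 1 <= ld F1 (v, b) by apply: ld_pos.
have sumv b : (ld F1 (v, b) + ld F1 (compl (v, b)))%N = minvdeg F1.
  by rewrite -vmin -(vdeg_ld F1 (v, b)).
have hdeg b : ld F1 (v, b) < minvdeg F1 ->
    forall w, w \in var F1 -> w != (v, b).1 -> ld F1 (v, b) < vdeg F1 w.
  by move=> lt w wF _; apply: leq_trans lt (hmin w wF).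
have sing : forall b, ld F1 (v, b) != 1.
  move=> b; apply/negP => /eqP e1.
  have lt1 : ld F1 (v, b) < minvdeg F1 by rewrite e1; apply: leq_trans _ hM2; apply: leq_trans _ hm.
  have hd := hdeg b lt1.
  set x := (v, b) in e1 hd.
  have /cardfs1P [C eC] : #|` [fset D in F1 | x \in D]| == 1 by rewrite -/(ld F1 x) e1.
  have CF : C \in [fset D in F1 | x \in D] by rewrite eC in_fset1.
  move: (CF); rewrite !inE /= => /andP [CF1 xC].
  have uC : forall D, D \in F1 -> x \in D -> D = C.
    move=> D DF xD; have : D \in [fset D in F1 | x \in D] by rewrite !inE /= DF xD.
    by rewrite eC in_fset1 => /eqP.
  have xv : x.1 \in var F1 by [].
  apply: (IH (Gx F1 x)).
  - have := info_card x mu1; rewrite e1 c1 addn1 => eq; by rewrite -ltnS eq.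
  - exact: info_MU mu1 sp1 xv.
  - by rewrite (info_def mu1 sp1 xv d1 hd w0F w0v) e1 subnK // ltnW.
  - exact (@info_nonempty F1 x mu1 hd w0 w0F w0v).
  have [w wG wmin] := minvdeg_ex (@info_nonempty F1 x mu1 hd w0 w0F w0v).
  rewrite -wmin; move: (wG); rewrite (info_var mu1 hd) in_fsetD1 => /andP [wx wF].
  have hv := Gx_vdeg mu1 sp1 xv wx.
  have hw := hmin w wF.
  case: (fset_0Vmem (Xx F1 x w)) => [X0|[D DX]].
    by move: hv; rewrite X0 cardfs0 addn0 => hv; apply: leq_trans hM2 (leq_trans hw hv).
  have X1 : #|` Xx F1 x w| <= 1.
    rewrite -(cardfs1 C); apply: fsubset_leq_card; apply/fsubsetP => E.
    rewrite !inE /= => /andP [EF /andP [xE _]]; by rewrite (uC E EF xE).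
  move: DX; rewrite !inE /= => /andP [DF /andP [xD oD]].
  move: oD; rewrite (uC D DF xD) => oC.
  have [yw ywC ywv] : exists2 yw, yw \in C & yw.1 = w.
    by case/orP: oC => h; [exists (w, true)|exists (w, false)].
  have ywx : yw.1 != x.1 by rewrite ywv.
  have := sing_count mu1 sp1 CF1 xC uC ywC ywx; rewrite ywv.
  have := sumv b; rewrite -/x e1 => s1 c2.
  exact: ar1 hM2 s1 c2 hv X1.
have info b : [/\ ld F1 (v, b) <= k, 2 <= ld F1 (v, b) &
    le_inf (Some (minvdeg F1 - ld F1 (v, b))) (f (k - ld F1 (v, b) + 1)%N)].
  have l2 : forall b, 2 <= ld F1 (v, b).
    by move=> b'; rewrite ltn_neqAle eq_sym sing lp.
  have lt : ld F1 (v, b) < minvdeg F1.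
    rewrite -(sumv b) -addn1 leq_add2l; exact: leq_trans _ (l2 (~~ b)).
  have hd := hdeg b lt.
  set x := (v, b) in lt hd *.
  have xv : x.1 \in var F1 by [].
  have le := info_le mu1 sp1 xv d1 hd w0F w0v.
  split => //; first exact: l2.
  have fb : le_inf (Some (minvdeg (Gx F1 x))) (f (k - ld F1 x + 1)%N).
    apply: (f_bound vf _ (info_MU mu1 sp1 xv) (info_def mu1 sp1 xv d1 hd w0F w0v)
      (@info_nonempty F1 x mu1 hd w0 w0F w0v)).
    by rewrite addn1.
  apply: le_inf_trans fb => /=.
  have [w wG wmin] := minvdeg_ex (@info_nonempty F1 x mu1 hd w0 w0F w0v).
  rewrite -wmin; move: (wG); rewrite (info_var mu1 hd) in_fsetD1 => /andP [wx wF].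
  have hv := Gx_vdeg mu1 sp1 xv wx.
  have hw := hmin w wF.
  have Xe : #|` Xx F1 x w| <= ld F1 x.
    apply: fsubset_leq_card; apply/fsubsetP => E.
    by rewrite !inE /= => /andP [EF /andP [xE _]]; rewrite EF xE.
  exact: ar2 hw hv Xe.
have [k0 l0 f0] := info true.
have [k1 l1 f1] := info false.
have sv : (ld F1 (v, true) + ld F1 (v, false))%N = minvdeg F1 by rewrite -vmin.
have [a [b hp]] := pair_exists vf hm hM2 sv l0 l1 k0 k1 f0 f1.
exact: nop hp.
Qed.

Close Scope fset_scope.
Unset Implicit Arguments.

Theorem theorem13p10 (k m : nat) (f : nat -> natinf) :
  (2 <= k)%N -> (4 <= m)%N -> valid_bounds_function f ->
  (forall e0 e1 : nat, ~ pdp f k m e0 e1) ->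
  forall s : natinf, is_mu k s -> le_inf s (Some m.-1).
Proof.
move=> hk hm vf nop s [_ hs]; apply: hs => F muF dF vF /=.
rewrite leqNgt; apply/negP => h.
have m0 : (0 < m)%N by apply: leq_trans hm.
apply: (@main_ind k m f hk hm vf nop #|` F|%fset F (leqnn _) muF dF vF).
by move: h; rewrite prednK.
Qed.
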